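(* Let $R$ be a $*$-ring and $e$ a projection in $R$. If $R$ is a generalized weakly Rickart $*$-ring, then so is $eRe$.
   Context: A $*$-ring is an associative ring $R$ with an involution $x\mapsto x^*$ (additive, $(xy)^*=y^*x^*$, $x^{**}=x$). A projection is an element $e$ with $e=e^*=e^2$; $eRe=\{exe: x\in R\}$ is a $*$-subring. In a $*$-ring $S$, a projection $f\in S$ is a generalized right projection of $x\in S$ if there exists $n\in\mathbb N$ with $x^nf=x^n$ and, for all $y\in S$, $x^ny=0$ implies $fy=0$. $S$ is a generalized weakly Rickart $*$-ring if every element of $S$ has a generalized right projection in $S$. *)

(* Defs.v *)
From mathcomp Require Import all_boot all_algebra.
Set Implicit Arguments. Unset Strict Implicit. Unset Printing Implicit Defensive.
Import GRing.Theory.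
Local Open Scope ring_scope.

(* A (not necessarily unital) associative ring is given by an additive abelian
   group [R : zmodType] together with a multiplication [mul]; a *-ring adds an
   involution [star]. *)
Record is_star_ring (R : zmodType) (mul : R -> R -> R) (star : R -> R) : Prop :=
  StarRing {
    sr_mulA : associative mul;
    sr_mulDl : left_distributive mul +%R;
    sr_mulDr : right_distributive mul +%R;
    sr_starD : forall x y, star (x + y) = star x + star y;
    sr_starM : forall x y, star (mul x y) = mul (star y) (star x);
    sr_starK : forall x, star (star x) = x
  }.

(* positive powers: spow mul x n = x^(n+1) *)
Definition spow (R : Type) (mul : R -> R -> R) (x : R) (n : nat) : R :=
  iter n (mul x) x.

Definition is_projection (R : Type) (mul : R -> R -> R) (star : R -> R) (e : R) : Prop :=
  e = star e /\ e = mul e e.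

Definition corner (R : Type) (mul : R -> R -> R) (e : R) : R -> Prop :=
  fun z => exists x, z = mul (mul e x) e.

(* generalized right projection of x in the *-subring S (a subset of R, with
   the operations of R) : a projection f of S with x^n f = x^n (n >= 1) and
   x^n y = 0 -> f y = 0 for all y in S *)
Definition gen_right_proj (R : zmodType) (mul : R -> R -> R) (star : R -> R)
  (S : R -> Prop) (x f : R) : Prop :=
  S f /\ is_projection mul star f /\
  exists n : nat, mul (spow mul x n) f = spow mul x n /\
    forall y, S y -> mul (spow mul x n) y = 0 -> mul f y = 0.

Definition gen_weakly_Rickart_on (R : zmodType) (mul : R -> R -> R)
  (star : R -> R) (S : R -> Prop) : Prop :=
  forall x, S x -> exists f, gen_right_proj mul star S x f.

Definition gen_weakly_Rickart (R : zmodType) (mul : R -> R -> R)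
  (star : R -> R) : Prop :=
  gen_weakly_Rickart_on mul star (fun _ => True).

(* Main.v *)
Require Import Defs.
From mathcomp Require Import all_boot all_algebra.
Import GRing.Theory.
Local Open Scope ring_scope.

Lemma mulrBr_gen (R : zmodType) (mul : R -> R -> R) :
  right_distributive mul +%R -> forall x a b, mul x (a - b) = mul x a - mul x b.
Proof.
move=> D x a b.
have H0 : mul x 0 = 0.
  by have := D x 0 0; rewrite addr0 => /(congr1 (fun z => z - mul x 0)); rewrite subrr addrK.
have HN : mul x (- b) = - mul x b.
  by apply/eqP; rewrite -subr_eq0 opprK -D addNr H0.
by rewrite D HN.
Qed.

Theorem mainTheorem12 (R : zmodType) (mul : R -> R -> R) (star : R -> R) (e : R) :
  is_star_ring mul star ->
  is_projection mul star e ->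
  gen_weakly_Rickart mul star ->
  gen_weakly_Rickart_on mul star (corner mul e).
Proof.
move=> [A Dl Dr SD SM SK] [Es Ee] GW x [a ->].
set x' := mul (mul e a) e.
have xe : mul x' e = x' by rewrite /x' -(A (mul e a) e e) -Ee.
have ey : forall y, corner mul e y -> mul e y = y.
  by move=> y [b ->]; rewrite A A -Ee.
have xne : forall n, mul (spow mul x' n) e = spow mul x' n.
  elim=> [|n IH] /=; first exact: xe.
  by rewrite -A; congr (mul x' _); exact: IH.
have [f [_ [[Fs Ff] [n [Hn Hk]]]]] := GW x' I.
have fef : f = mul (mul f e) f.
  have h : mul (spow mul x' n) (f - mul e f) = 0.
    by rewrite mulrBr_gen // A xne Hn subrr.
  have := Hk _ I h.
  rewrite mulrBr_gen // => /eqP; rewrite subr_eq0 => /eqP.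
  by rewrite -Ff A.
exists (mul (mul e f) e); split; first by exists f.
split; first split.
- by rewrite SM SM -Es -Fs A.
- rewrite !A -(A _ e e) -Ee -(A e f e) -(A e (mul f e) f) -fef.
  by rewrite A.
exists n; split.
- by rewrite A A xne Hn xne.
- move=> y Cy H.
  have := Hk _ I H.
  rewrite -A (ey y Cy) -A => ->.
  have := @mulrBr_gen _ mul Dr e 0 0; rewrite !subrr; by [].
Qed.
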